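(* For every $N\ge1$ and every $f\in H_N^{\mathrm{sip}}$ one has $\mathcal E_N(f)\ge\mathcal R_N(f)$, where $\mathcal E_N$ and $\mathcal R_N$ are the Dirichlet forms described in the context.
   Context: Fix $\gamma>0$ and $p:\mathbb R\to[0,\infty)$ symmetric, finite range $R$, $p(0)=0$. $p_N(r)=p(Nr)$, $A_N=\frac1N\{-R,\dots,R\}\setminus\{0\}$, $A_N^+=\{|r|:r\in A_N\}$. $\mu_N$ gives mass $\frac1N$ to each point of $\frac1N\mathbb Z$, $\nu_{\gamma,N}=\mu_N+\sqrt2\gamma\delta_0$, $H_N^{\mathrm{sip}}=L^2(\frac1N\mathbb Z,\nu_{\gamma,N})$. $\mathcal E_N(f)=-\sum_{w\in\frac1N\mathbb Z}f(w)\sum_{r\in A_N}2p_N(r)\big(\frac{N^2}2+\frac{N^3\gamma}{\sqrt2}\mathbf 1_{\{r=-w\}}\big)(f(w+r)-f(w))\,\nu_{\gamma,N}(w)$ (the Dirichlet form of the rescaled SIP difference process). $\mathcal R_N(f)=-\sum_{v\in\frac1N\mathbb Z}f(v)\,\Delta_Nf(v)\,\mu_N(v)$ with $\Delta_Ng(v)=N^2\sum_{r\in A_N^+}p_N(r)[g(v+r)-2g(v)+g(v-r)]$ (the Dirichlet form of the diffusively rescaled random walk). *)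

(* Defs.v *)
From Stdlib Require Import Reals List ZArith Lra.
From Coquelicot Require Import Coquelicot.
Open Scope R_scope.

Definition zsum (u : Z -> R) : R :=
  Series (fun n : nat => u (Z.of_nat n)) + Series (fun n : nat => u (- Z.of_nat n - 1)%Z).

Definition ex_zsum (u : Z -> R) : Prop :=
  ex_series (fun n : nat => u (Z.of_nat n)) /\ ex_series (fun n : nat => u (- Z.of_nat n - 1)%Z).

Definition lsum (l : list Z) (F : Z -> R) : R := fold_right (fun j acc => F j + acc) 0 l.

(* integer labels j of A_N = (1/N){-Rng,...,Rng} \ {0} (r = j/N) *)
Definition A_int (Rng : nat) : list Z :=
  filter (fun j => negb (Z.eqb j 0))
    (map (fun i => (Z.of_nat i - Z.of_nat Rng)%Z) (seq 0 (2 * Rng + 1))).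

(* integer labels j of A_N^+ = {|r| : r in A_N} = {1/N, ..., Rng/N} *)
Definition Aplus_int (Rng : nat) : list Z := map (fun i => Z.of_nat (S i)) (seq 0 Rng).

Definition pt (N : nat) (k : Z) : R := IZR k / INR N.

Definition nu (gamma : R) (N : nat) (w : R) : R :=
  / INR N + (if Req_EM_T w 0 then sqrt 2 * gamma else 0).

(* f in H_N^sip = L^2((1/N)Z, nu_{gamma,N}) *)
Definition in_H_sip (gamma : R) (N : nat) (f : R -> R) : Prop :=
  ex_zsum (fun k => (f (pt N k)) ^ 2 * nu gamma N (pt N k)).

Definition pN (p : R -> R) (N : nat) (r : R) : R := p (INR N * r).

Definition E_N (p : R -> R) (Rng : nat) (gamma : R) (N : nat) (f : R -> R) : R :=
  - zsum (fun k =>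
      let w := pt N k in
      f w * lsum (A_int Rng) (fun j =>
        let r := pt N j in
        2 * pN p N r
          * (INR N ^ 2 / 2 + (if Req_EM_T r (- w) then INR N ^ 3 * gamma / sqrt 2 else 0))
          * (f (w + r) - f w))
      * nu gamma N w).

Definition Delta_N (p : R -> R) (Rng : nat) (N : nat) (g : R -> R) (v : R) : R :=
  INR N ^ 2 * lsum (Aplus_int Rng) (fun j =>
    let r := pt N j in pN p N r * (g (v + r) - 2 * g v + g (v - r))).

Definition R_N (p : R -> R) (Rng : nat) (N : nat) (f : R -> R) : R :=
  - zsum (fun k => let v := pt N k in f v * Delta_N p Rng N f v * (/ INR N)).

(* Main.v *)
Require Import Defs.
From Stdlib Require Import Reals List ZArith Lra Lia Permutation.
From Coquelicot Require Import Coquelicot.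
Open Scope R_scope.

Lemma is_series_zero : is_series (fun _ : nat => 0) 0.
Proof.
  apply filterlim_ext with (fun _ => 0).
  - intros n. rewrite sum_n_const. simpl. change (zero:R) with 0. ring.
  - apply filterlim_const.
Qed.

Lemma ex_zsum_ext u v : (forall k, u k = v k) -> ex_zsum u -> ex_zsum v.
Proof.
  intros H [H1 H2]; split; [eapply ex_series_ext; [|exact H1]|eapply ex_series_ext; [|exact H2]]; intros; simpl; auto.
Qed.

Lemma zsum_ext u v : (forall k, u k = v k) -> zsum u = zsum v.
Proof.
  intros H; unfold zsum; f_equal; apply Series_ext; auto.
Qed.

Lemma ex_zsum_plus u v : ex_zsum u -> ex_zsum v -> ex_zsum (fun k => u k + v k).
Proof.
  intros [H1 H2] [H3 H4]; split; apply (ex_series_plus _ _ H1 H3) || apply (ex_series_plus _ _ H2 H4).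
Qed.

Lemma zsum_plus u v : ex_zsum u -> ex_zsum v -> zsum (fun k => u k + v k) = zsum u + zsum v.
Proof.
  intros [H1 H2] [H3 H4]; unfold zsum.
  rewrite (Series_plus _ _ H1 H3), (Series_plus _ _ H2 H4); ring.
Qed.

Lemma ex_zsum_scal c u : ex_zsum u -> ex_zsum (fun k => c * u k).
Proof.
  intros [H1 H2]; split; apply (ex_series_scal_l c _ H1) || apply (ex_series_scal_l c _ H2).
Qed.

Lemma zsum_scal c u : zsum (fun k => c * u k) = c * zsum u.
Proof.
  unfold zsum; rewrite !Series_scal_l; ring.
Qed.

Lemma ex_zsum_zero : ex_zsum (fun _ => 0).
Proof. split; exists 0; apply is_series_zero. Qed.

Lemma zsum_zero : zsum (fun _ => 0) = 0.
Proof. unfold zsum; rewrite !(is_series_unique _ _ is_series_zero); ring. Qed.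

Lemma ex_zsum_le u v : (forall k, Rabs (u k) <= v k) -> ex_zsum v -> ex_zsum u.
Proof.
  intros H [H1 H2]; split.
  - apply (ex_series_le (fun n => u (Z.of_nat n)) _ (fun n => H _) H1).
  - apply (ex_series_le (fun n => u (- Z.of_nat n - 1)%Z) _ (fun n => H _) H2).
Qed.

Lemma nat_delta_ex n0 c : ex_series (fun n : nat => if Nat.eq_dec n n0 then c else 0).
Proof.
  revert c; induction n0; intros c.
  - apply (proj2 (ex_series_incr_1 _)). eapply ex_series_ext. 2: exists 0; apply is_series_zero.
    intros n; simpl. destruct (Nat.eq_dec (S n) 0); [lia|auto].
  - apply (proj2 (ex_series_incr_1 _)). eapply ex_series_ext. 2: apply (IHn0 c).
    intros n; simpl. destruct (Nat.eq_dec n n0), (Nat.eq_dec (S n) (S n0)); auto; lia.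
Qed.

Lemma nat_delta n0 c : Series (fun n : nat => if Nat.eq_dec n n0 then c else 0) = c.
Proof.
  revert c; induction n0; intros c.
  - rewrite (Series_incr_1 _ (nat_delta_ex _ c)). simpl.
    rewrite (is_series_unique _ _ is_series_zero). ring.
  - rewrite (Series_incr_1 _ (nat_delta_ex _ c)).
    destruct (Nat.eq_dec 0 (S n0)); [lia|].
    rewrite Rplus_0_l. etransitivity; [|apply (IHn0 c)]. apply Series_ext.
    intros m. destruct (Nat.eq_dec m n0), (Nat.eq_dec (S m) (S n0)); auto; lia.
Qed.

Lemma ex_zsum_delta m c : ex_zsum (fun k => if Z.eq_dec k m then c else 0).
Proof.
  destruct (Z_le_gt_dec 0 m).
  - split.
    + eapply ex_series_ext. 2: apply (nat_delta_ex (Z.to_nat m) c).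
      intros n; simpl. destruct (Nat.eq_dec n (Z.to_nat m)), (Z.eq_dec (Z.of_nat n) m); auto; lia.
    + eapply ex_series_ext. 2: exists 0; apply is_series_zero.
      intros n; simpl. destruct (Z.eq_dec (- Z.of_nat n - 1) m); auto; lia.
  - split.
    + eapply ex_series_ext. 2: exists 0; apply is_series_zero.
      intros n; simpl. destruct (Z.eq_dec (Z.of_nat n) m); auto; lia.
    + eapply ex_series_ext. 2: apply (nat_delta_ex (Z.to_nat (- m - 1)) c).
      intros n; simpl. destruct (Nat.eq_dec n (Z.to_nat (-m-1))), (Z.eq_dec (- Z.of_nat n - 1) m); auto; lia.
Qed.

Lemma zsum_delta m c : zsum (fun k => if Z.eq_dec k m then c else 0) = c.
Proof.
  unfold zsum. destruct (Z_le_gt_dec 0 m).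
  - rewrite (Series_ext _ (fun n => if Nat.eq_dec n (Z.to_nat m) then c else 0)).
    rewrite nat_delta. rewrite (Series_ext _ (fun _ => 0)).
    rewrite (is_series_unique _ _ is_series_zero). ring.
    intros n; destruct (Z.eq_dec (- Z.of_nat n - 1) m); auto; lia.
    intros n; destruct (Nat.eq_dec n (Z.to_nat m)), (Z.eq_dec (Z.of_nat n) m); auto; lia.
  - rewrite (Series_ext (fun n => if Z.eq_dec (- Z.of_nat n - 1) m then c else 0) (fun n => if Nat.eq_dec n (Z.to_nat (-m-1)) then c else 0)).
    rewrite nat_delta. rewrite (Series_ext _ (fun _ => 0)).
    rewrite (is_series_unique _ _ is_series_zero). ring.
    intros n; destruct (Z.eq_dec (Z.of_nat n) m); auto; lia.
    intros n; destruct (Nat.eq_dec n (Z.to_nat (-m-1))), (Z.eq_dec (- Z.of_nat n - 1) m); auto; lia.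
Qed.

Lemma ex_zsum_shift1 u : ex_zsum u -> ex_zsum (fun k => u (k + 1)%Z).
Proof.
  intros [H1 H2]; split.
  - apply ex_series_incr_1 in H1. eapply ex_series_ext. 2: exact H1.
    intros n; cbv beta; f_equal; lia.
  - apply (proj2 (ex_series_incr_1 _)). eapply ex_series_ext. 2: exact H2.
    intros n; cbv beta; f_equal; lia.
Qed.

Lemma ex_zsum_shiftm1 u : ex_zsum u -> ex_zsum (fun k => u (k - 1)%Z).
Proof.
  intros [H1 H2]; split.
  - apply (proj2 (ex_series_incr_1 _)). eapply ex_series_ext. 2: exact H1.
    intros n; cbv beta; f_equal; lia.
  - apply ex_series_incr_1 in H2. eapply ex_series_ext. 2: exact H2.
    intros n; cbv beta; f_equal; lia.
Qed.

Lemma ex_zsum_shift u j : ex_zsum u -> ex_zsum (fun k => u (k + j)%Z).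
Proof.
  intros H. destruct (Z_le_gt_dec 0 j).
  - replace j with (Z.of_nat (Z.to_nat j)) by lia. induction (Z.to_nat j).
    + eapply ex_zsum_ext; [|exact H]. intros; simpl; f_equal; lia.
    + eapply ex_zsum_ext; [|exact (ex_zsum_shift1 _ IHn)]. intros; simpl; f_equal; lia.
  - replace j with (- Z.of_nat (Z.to_nat (-j)))%Z by lia. induction (Z.to_nat (-j)).
    + eapply ex_zsum_ext; [|exact H]. intros; simpl; f_equal; lia.
    + eapply ex_zsum_ext; [|exact (ex_zsum_shiftm1 _ IHn)]. intros; simpl; f_equal; lia.
Qed.

Lemma ex_zsum_lsum (l : list Z) (H : Z -> Z -> R) :
  (forall j, In j l -> ex_zsum (H j)) -> ex_zsum (fun k => lsum l (fun j => H j k)).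
Proof.
  induction l; intros Hl; simpl.
  - apply ex_zsum_zero.
  - apply ex_zsum_plus. apply Hl; simpl; auto. apply IHl; intros; apply Hl; simpl; auto.
Qed.

Lemma zsum_lsum (l : list Z) (H : Z -> Z -> R) :
  (forall j, In j l -> ex_zsum (H j)) -> zsum (fun k => lsum l (fun j => H j k)) = lsum l (fun j => zsum (H j)).
Proof.
  induction l; intros Hl; simpl.
  - apply zsum_zero.
  - rewrite zsum_plus. rewrite IHl. auto. intros; apply Hl; simpl; auto.
    apply Hl; simpl; auto. apply ex_zsum_lsum; intros; apply Hl; simpl; auto.
Qed.

Lemma lsum_plus l a b : lsum l (fun j => a j + b j) = lsum l a + lsum l b.
Proof. induction l; simpl; [ring|rewrite IHl; ring]. Qed.
Lemma lsum_scal l c a : lsum l (fun j => c * a j) = c * lsum l a.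
Proof. induction l; simpl; [ring|rewrite IHl; ring]. Qed.
Lemma lsum_ext_in l a b : (forall j, In j l -> a j = b j) -> lsum l a = lsum l b.
Proof. induction l; intros H; simpl; auto. rewrite H, IHl; simpl; auto. intros; apply H; simpl; auto. Qed.
Lemma lsum_app l1 l2 a : lsum (l1 ++ l2) a = lsum l1 a + lsum l2 a.
Proof. induction l1; simpl; [ring|rewrite IHl1; ring]. Qed.
Lemma lsum_map l a g : lsum (map g l) a = lsum l (fun j => a (g j)).
Proof. induction l; simpl; auto. rewrite IHl; auto. Qed.
Lemma lsum_perm l1 l2 a : Permutation l1 l2 -> lsum l1 a = lsum l2 a.
Proof. induction 1; simpl; try ring; congruence. Qed.
Lemma lsum_nonpos l a : (forall j, In j l -> a j <= 0) -> lsum l a <= 0.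
Proof. induction l; intros H; simpl. lra. assert (a a0 <= 0) by (apply H; simpl; auto).
  assert (lsum l a <= 0) by (apply IHl; intros; apply H; simpl; auto). lra. Qed.

Lemma In_A_int R j : In j (A_int R) <-> ((- Z.of_nat R <= j <= Z.of_nat R)%Z /\ j <> 0%Z).
Proof.
  unfold A_int. rewrite filter_In, in_map_iff. split.
  - intros [[i [Hi Hin]] Hz]. apply in_seq in Hin. apply Bool.negb_true_iff, Z.eqb_neq in Hz. lia.
  - intros [H1 H2]. split.
    + exists (Z.to_nat (j + Z.of_nat R)). split. lia. apply in_seq. lia.
    + apply Bool.negb_true_iff, Z.eqb_neq. auto.
Qed.

Lemma In_Aplus R j : In j (Aplus_int R) <-> (1 <= j <= Z.of_nat R)%Z.
Proof.
  unfold Aplus_int. rewrite in_map_iff. split.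
  - intros [i [Hi Hin]]. apply in_seq in Hin. lia.
  - intros H. exists (Z.to_nat (j - 1)). split. lia. apply in_seq. lia.
Qed.

Lemma NoDup_A_int R : NoDup (A_int R).
Proof.
  unfold A_int. apply NoDup_filter. apply FinFun.Injective_map_NoDup.
  intros x y H. lia. apply seq_NoDup.
Qed.

Lemma NoDup_Aplus R : NoDup (Aplus_int R).
Proof.
  unfold Aplus_int. apply FinFun.Injective_map_NoDup.
  intros x y H. lia. apply seq_NoDup.
Qed.

Lemma perm_A R : Permutation (A_int R) (Aplus_int R ++ map Z.opp (Aplus_int R)).
Proof.
  apply NoDup_Permutation. apply NoDup_A_int.
  apply NoDup_app. apply NoDup_Aplus. apply FinFun.Injective_map_NoDup.
  intros x y H; lia. apply NoDup_Aplus.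
  intros a Ha Hb. apply In_Aplus in Ha. apply in_map_iff in Hb. destruct Hb as [b [Hb1 Hb2]].
  apply In_Aplus in Hb2. lia.
  intros x. rewrite In_A_int, in_app_iff, in_map_iff, In_Aplus. split.
  - intros H. destruct (Z_le_gt_dec x 0). right. exists (- x)%Z. rewrite In_Aplus. lia. left. lia.
  - intros [H|[y [H1 H2]]]. lia. apply In_Aplus in H2. lia.
Qed.

Lemma lsum_A_sym R a : lsum (A_int R) a = lsum (Aplus_int R) (fun j => a j + a (- j)%Z).
Proof.
  rewrite (lsum_perm _ _ _ (perm_A R)), lsum_app, lsum_map, lsum_plus. auto.
Qed.

Lemma INR_pos N : (1 <= N)%nat -> 0 < INR N.
Proof. intros; apply lt_0_INR; lia. Qed.

Lemma pt_add N a b : (1 <= N)%nat -> pt N a + pt N b = pt N (a + b).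
Proof. intros H; pose proof (INR_pos N H). unfold pt; rewrite plus_IZR; field; lra. Qed.
Lemma pt_opp N a : (1 <= N)%nat -> - pt N a = pt N (- a).
Proof. intros H; pose proof (INR_pos N H). unfold pt; rewrite opp_IZR; field; lra. Qed.
Lemma pt_sub N a b : (1 <= N)%nat -> pt N a - pt N b = pt N (a - b).
Proof. intros H; pose proof (INR_pos N H). unfold pt; rewrite minus_IZR; field; lra. Qed.
Lemma pt_0 N : pt N 0 = 0.
Proof. unfold pt; simpl; unfold Rdiv; ring. Qed.
Lemma pt_inj N a b : (1 <= N)%nat -> pt N a = pt N b -> a = b.
Proof. intros H E; pose proof (INR_pos N H). unfold pt in E.
  apply eq_IZR. apply (Rmult_eq_reg_r (/ INR N)); auto. apply Rgt_not_eq, Rinv_0_lt_compat; lra. Qed.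
Lemma Req_pt N a b (x y : R) : (1 <= N)%nat ->
  (if Req_EM_T (pt N a) (pt N b) then x else y) = (if Z.eq_dec a b then x else y).
Proof. intros H. destruct (Req_EM_T _ _), (Z.eq_dec a b); auto.
  apply pt_inj in e; auto; congruence. subst; congruence. Qed.
Lemma pN_pt p N j : (1 <= N)%nat -> pN p N (pt N j) = p (IZR j).
Proof. intros H; pose proof (INR_pos N H). unfold pN, pt; f_equal; field; lra. Qed.
Lemma nu_pt gamma N k : (1 <= N)%nat ->
  nu gamma N (pt N k) = / INR N + (if Z.eq_dec k 0 then sqrt 2 * gamma else 0).
Proof. intros H. unfold nu. rewrite <- (pt_0 N), Req_pt; auto. Qed.

Theorem proposition5p6 (gamma : R) (p : R -> R) (Rng : nat)
  (hgamma : 0 < gamma)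
  (hp_nonneg : forall x, 0 <= p x)
  (hp_sym : forall x, p (- x) = p x)
  (hp_range : forall x, INR Rng < Rabs x -> p x = 0)
  (hp0 : p 0 = 0)
  (N : nat) (hN : (1 <= N)%nat) (f : R -> R)
  (hf : in_H_sip gamma N f) :
  E_N p Rng gamma N f >= R_N p Rng N f.
Proof.
  pose proof (INR_pos N hN) as HN.
  set (Nr := INR N). assert (HNr : 0 < Nr) by exact HN.
  set (F := fun k => f (pt N k)).
  set (s := sqrt 2 * gamma).
  assert (Hs : 0 < s) by (unfold s; pose proof (sqrt_lt_R0 2); nra).
  assert (Hsq : sqrt 2 * sqrt 2 = 2) by (apply sqrt_sqrt; lra).
  assert (Hsq0 : 0 < sqrt 2) by (apply sqrt_lt_R0; lra).
  set (c := fun j => s * Nr ^ 2 * p (IZR j) * (F 0%Z * F j - F 0%Z ^ 2)).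
  set (d := fun j => s * Nr ^ 2 * p (IZR j) * (F (- j)%Z * F 0%Z - F (- j)%Z ^ 2)).
  set (hj := fun j k => (if Z.eq_dec k 0 then c j else 0) + (if Z.eq_dec k (- j) then d j else 0)).
  set (A := A_int Rng). set (Ap := Aplus_int Rng).
  assert (HF2 : ex_zsum (fun k => F k ^ 2)).
  { apply ex_zsum_le with (fun k => Nr * (f (pt N k) ^ 2 * nu gamma N (pt N k))).
    2: apply ex_zsum_scal, hf.
    intros k. rewrite nu_pt by auto. unfold F.
    assert (0 <= f (pt N k) ^ 2) by nra.
    assert (0 <= (if Z.eq_dec k 0 then s else 0)) by (destruct (Z.eq_dec k 0); lra).
    fold s. rewrite Rabs_right by lra. fold Nr.
    replace (Nr * (f (pt N k) ^ 2 * (/ Nr + (if Z.eq_dec k 0 then s else 0))))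
      with (f (pt N k) ^ 2 + Nr * f (pt N k) ^ 2 * (if Z.eq_dec k 0 then s else 0)) by (field; lra).
    assert (0 <= Nr * f (pt N k) ^ 2 * (if Z.eq_dec k 0 then s else 0)).
    { apply Rmult_le_pos; auto. apply Rmult_le_pos; lra. }
    lra. }
  assert (Hprod : forall j, ex_zsum (fun k => F k * F (k + j)%Z)).
  { intros j. apply ex_zsum_le with (fun k => F k ^ 2 + F (k + j)%Z ^ 2).
    intros k. apply Rabs_le. split; nra.
    apply ex_zsum_plus; auto. apply (ex_zsum_shift (fun k => F k ^ 2)); auto. }
  set (g := fun k => F k * (Nr ^ 2 * lsum Ap (fun j => p (IZR j) * (F (k + j)%Z - 2 * F k + F (k - j)%Z))) * / Nr).
  assert (Hg : ex_zsum g).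
  { apply ex_zsum_ext with (fun k => lsum Ap (fun j => (Nr ^ 2 * / Nr * p (IZR j)) *
        (F k * F (k + j)%Z - 2 * F k ^ 2 + F k * F (k + - j)%Z))).
    - intros k. unfold g. symmetry.
      transitivity (F k * Nr ^ 2 * / Nr * lsum Ap (fun j => p (IZR j) * (F (k + j)%Z - 2 * F k + F (k - j)%Z))); [ring|].
      rewrite <- lsum_scal. apply lsum_ext_in; intros j _.
      replace (k - j)%Z with (k + - j)%Z by lia. ring.
    - apply ex_zsum_lsum. intros j _. apply ex_zsum_scal.
      apply ex_zsum_plus. apply ex_zsum_plus. apply Hprod.
      apply ex_zsum_scal with (c := -2) in HF2. eapply ex_zsum_ext; [|exact HF2]. intros; simpl; ring.
      apply Hprod. }
  assert (HR : R_N p Rng N f = - zsum g).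
  { unfold R_N. f_equal. apply zsum_ext. intros k. cbv zeta. unfold g, Delta_N. fold Nr.
    f_equal. f_equal. f_equal. apply lsum_ext_in. intros j _.
    rewrite pN_pt, pt_add, pt_sub by auto. reflexivity. }
  set (Z0 := fun k => lsum A (fun j => hj j k)).
  assert (HZ : ex_zsum Z0).
  { apply ex_zsum_lsum. intros j _. apply ex_zsum_plus; apply ex_zsum_delta. }
  assert (HZv : zsum Z0 = lsum A (fun j => c j + d j)).
  { unfold Z0. rewrite zsum_lsum. apply lsum_ext_in. intros j _. unfold hj.
    rewrite zsum_plus by apply ex_zsum_delta. rewrite !zsum_delta. auto.
    intros j _. apply ex_zsum_plus; apply ex_zsum_delta. }
  assert (HZneg : lsum A (fun j => c j + d j) <= 0).
  { unfold A. rewrite lsum_A_sym. apply lsum_nonpos. intros j _.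
    unfold c, d. rewrite opp_IZR, hp_sym. replace (- - j)%Z with j by lia.
    pose proof (hp_nonneg (IZR j)).
    assert (0 <= s * Nr ^ 2 * p (IZR j)) by (apply Rmult_le_pos; [apply Rmult_le_pos|]; nra).
    assert (0 <= (F j - F 0%Z) ^ 2 + (F (- j)%Z - F 0%Z) ^ 2) by (apply Rplus_le_le_0_compat; apply pow2_ge_0).
    assert (0 <= s * Nr ^ 2 * p (IZR j) * ((F j - F 0%Z) ^ 2 + (F (- j)%Z - F 0%Z) ^ 2)) by (apply Rmult_le_pos; auto).
    nra. }
  assert (HE : E_N p Rng gamma N f = - zsum (fun k => g k + Z0 k)).
  { unfold E_N. f_equal. apply zsum_ext. intros k. cbv zeta.
    rewrite nu_pt by auto. fold Nr s.
    rewrite (lsum_ext_in _ _ (fun j => p (IZR j) * Nr ^ 2 * (F (k + j)%Z - F k) +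
       (if Z.eq_dec j (- k) then 2 * p (IZR j) * (Nr ^ 3 * gamma / sqrt 2) * (F 0%Z - F k) else 0))).
    2: { intros j _. rewrite pN_pt, pt_opp, Req_pt, pt_add by auto. fold Nr.
         destruct (Z.eq_dec j (- k)).
         - subst j. replace (k + - k)%Z with 0%Z by lia. unfold F. field; lra.
         - unfold F. field; lra. }
    rewrite lsum_plus. unfold A. rewrite lsum_A_sym. fold A.
    rewrite lsum_plus.
    assert (HL1 : lsum (Aplus_int Rng) (fun j : Z => p (IZR j) * Nr ^ 2 * (F (k + j)%Z - F k)) +
       lsum (Aplus_int Rng) (fun j : Z => p (IZR (- j)) * Nr ^ 2 * (F (k + - j)%Z - F k)) =
       Nr ^ 2 * lsum Ap (fun j : Z => p (IZR j) * (F (k + j)%Z - 2 * F k + F (k - j)%Z))).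
    { rewrite <- lsum_plus, <- lsum_scal. apply lsum_ext_in. intros j _.
      rewrite opp_IZR, hp_sym. replace (k + - j)%Z with (k - j)%Z by lia. ring. }
    rewrite HL1. clear HL1.
    change (f (pt N k)) with (F k).
    unfold g, Z0, hj.
    assert (E1 : lsum (A_int Rng) (fun _ : Z => 0) = 0) by (clear; induction (A_int Rng); simpl; auto; rewrite IHl; ring).
    set (L1 := lsum Ap _).
    destruct (Z.eq_dec k 0).
    - subst k.
      assert (H2 : lsum A (fun j => if Z.eq_dec j (- 0) then 2 * p (IZR j) * (Nr ^ 3 * gamma / sqrt 2) * (F 0%Z - F 0%Z) else 0) = 0).
      { rewrite <- E1. apply lsum_ext_in. intros j Hj. apply In_A_int in Hj. destruct (Z.eq_dec j (-0)); auto; lia. }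
      assert (H3 : lsum A (fun j => c j + (if Z.eq_dec 0 (- j) then d j else 0)) = lsum A c).
      { apply lsum_ext_in. intros j Hj. apply In_A_int in Hj. destruct (Z.eq_dec 0 (-j)); [lia|].
        ring. }
      rewrite H2, H3.
      assert (Hx : lsum A c = s * Nr ^ 2 * F 0%Z * L1).
      { unfold A; rewrite lsum_A_sym. unfold L1. rewrite <- lsum_scal. apply lsum_ext_in. intros j _. unfold c. rewrite opp_IZR, hp_sym.
        replace (0 + j)%Z with j by lia. replace (0 - j)%Z with (- j)%Z by lia. ring. }
      rewrite Hx. field; lra.
    - set (L2 := lsum A (fun j => if Z.eq_dec j (- k) then _ else 0)).
      assert (H3 : lsum A (fun j => 0 + (if Z.eq_dec k (- j) then d j else 0)) = lsum A (fun j => if Z.eq_dec k (- j) then d j else 0)).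
      { apply lsum_ext_in. intros j _. ring. }
      rewrite H3.
      assert (HL : F k * L2 * / Nr = lsum A (fun j => if Z.eq_dec k (- j) then d j else 0)).
      { transitivity (F k * / Nr * L2); [ring|]. unfold L2. rewrite <- lsum_scal. apply lsum_ext_in.
        intros j _. destruct (Z.eq_dec j (- k)), (Z.eq_dec k (- j)); try lia.
        - unfold d. replace (- j)%Z with k by lia. unfold s.
          replace 2 with (sqrt 2 * sqrt 2) at 1 by auto. field; lra.
        - ring. }
      destruct (Z.eq_dec k 0); [lia|].
      rewrite <- HL. field; lra. }
  rewrite HE, HR, zsum_plus by auto. rewrite HZv. lra.
Qed.
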